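(* Let $x_1,\dots,x_m\in\mathbb{R}^n$ and $r_1,\dots,r_m\in\mathbb{R}^n$ be arbitrary vectors with $r_1,\dots,r_m$ affinely independent. Let $\Delta x_i=x_{i+1}-x_i$, $\Delta r_i=r_{i+1}-r_i$ for $i=1,\dots,m-1$, $\Delta X=[\Delta x_1,\dots,\Delta x_{m-1}]$, $\Delta R=[\Delta r_1,\dots,\Delta r_{m-1}]$. Then $\Delta R^{\mathrm T}\Delta R$ is invertible and $$x_1-\Delta X(\Delta R^{\mathrm T}\Delta R)^{-1}\Delta R^{\mathrm T}r_1=\bar x-\Phi\Psi^{+}\bar r,$$ with $\bar x,\bar r,\Phi,\Psi$ as in the context.
   Context: $\bar x=\frac1m\sum_{i=1}^m x_i$, $\bar r=\frac1m\sum_{i=1}^m r_i$, $\Phi=[x_1-\bar x,\dots,x_m-\bar x]\in\mathbb{R}^{n\times m}$, $\Psi=[r_1-\bar r,\dots,r_m-\bar r]\in\mathbb{R}^{n\times m}$, and $\Psi^{+}$ is the Moore–Penrose pseudoinverse of $\Psi$. Vectors $r_1,\dots,r_m$ are affinely independent if $r_2-r_1,\dots,r_m-r_1$ are linearly independent. *)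

(* Defs.v *)
From HB Require Import structures.
From mathcomp Require Import all_boot all_order all_algebra.
From mathcomp Require Import boolp reals.
Set Implicit Arguments. Unset Strict Implicit. Unset Printing Implicit Defensive.
Import Order.TTheory GRing.Theory Num.Theory.
Local Open Scope ring_scope.

Definition is_pinv (R : realType) (n k : nat) (A : 'M[R]_(n, k)) (P : 'M[R]_(k, n)) : Prop :=
  [/\ A *m P *m A = A, P *m A *m P = P, (A *m P)^T = A *m P & (P *m A)^T = P *m A].

Definition pinv (R : realType) (n k : nat) (A : 'M[R]_(n, k)) : 'M[R]_(k, n) :=
  match pselect (exists P, is_pinv A P) with
  | left h => proj1_sig (cid h)
  | right _ => 0
  end.

Definition affinely_independent (R : realType) (n m : nat) (r : 'I_m.+1 -> 'cV[R]_n) : bool :=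
  row_free (\matrix_(i < m, a < n) (r (lift ord0 i) - r ord0) a 0).

Definition cols_mat (R : realType) (n k : nat) (v : 'I_k -> 'cV[R]_n) : 'M[R]_(n, k) :=
  \matrix_(a < n, i < k) v i a 0.

Definition fdiff_mat (R : realType) (n m : nat) (x : 'I_m.+1 -> 'cV[R]_n) : 'M[R]_(n, m) :=
  cols_mat (fun i : 'I_m => x (lift ord0 i) - x (widen_ord (leqnSn m) i)).

Definition mean_col (R : realType) (n m : nat) (x : 'I_m.+1 -> 'cV[R]_n) : 'cV[R]_n :=
  (m.+1%:R)^-1 *: \sum_(i < m.+1) x i.

Definition centered_mat (R : realType) (n m : nat) (x : 'I_m.+1 -> 'cV[R]_n) : 'M[R]_(n, m.+1) :=
  cols_mat (fun i => x i - mean_col x).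

(* Main.v *)
Require Import Defs.
From HB Require Import structures.
From mathcomp Require Import all_boot all_order all_algebra.
From mathcomp Require Import boolp reals.
Set Implicit Arguments. Unset Strict Implicit. Unset Printing Implicit Defensive.
Import Order.TTheory GRing.Theory Num.Theory.
Local Open Scope ring_scope.

Section Alg.
Variable R : realType.

Lemma sos_eq0 (n : nat) (w : 'rV[R]_n) : w *m w^T = 0 -> w = 0.
Proof.
move=> h; apply/rowP => i; rewrite mxE.
have := congr1 (fun M : 'M_1 => M 0 0) h; rewrite !mxE => hs.
have hp : forall j, xpredT j -> 0 <= w 0 j * w^T j 0.
  by move=> j _; rewrite !mxE -expr2 sqr_ge0.
have := @psumr_eq0P R _ xpredT (fun j => w 0 j * w^T j 0) hp hs i isT.
rewrite !mxE -expr2 => /eqP; rewrite sqrf_eq0 => /eqP //.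
Qed.

Lemma unit_part (n m : nat) (Rm : 'M[R]_(n, m.+1)) (S E : 'M[R]_(m.+1, m)) (T : 'M[R]_m) :
  S = E *m T -> T \in unitmx -> row_free (Rm *m E)^T ->
  (Rm *m S)^T *m (Rm *m S) \in unitmx.
Proof.
move=> hS hT hF; rewrite -row_free_unit; apply/inj_row_free => v hv.
have h1 : v *m (Rm *m S)^T = 0.
  apply: sos_eq0; rewrite [(v *m _)^T]trmx_mul trmxK mulmxA -(mulmxA v) hv mul0mx //.
have h2 : v *m T^T = 0.
  apply: (row_free_inj hF); rewrite mul0mx -mulmxA -trmx_mul -mulmxA -hS //.
have hTt : T^T \in unitmx by rewrite unitmx_tr.
by rewrite -(mulmx1 v) -(mulmxV hTt) mulmxA h2 mul0mx.
Qed.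

Lemma alg_part (n m : nat) (Xm Rm : 'M[R]_(n, m.+1)) (S E : 'M[R]_(m.+1, m))
  (Ft : 'M[R]_(m, m.+1)) (T : 'M[R]_m) (o e0 u : 'cV[R]_(m.+1)) (Z : 'M[R]_(m.+1, n)) :
  S = E *m T -> T \in unitmx ->
  (Rm *m S)^T *m (Rm *m S) \in unitmx ->
  E *m Ft = 1%:M - e0 *m o^T -> o^T *m S = 0 -> o^T *m u = 1%:M -> o^T *m e0 = 1%:M ->
  (u *m o^T)^T = u *m o^T ->
  ((exists P, is_pinv (Rm *m (1%:M - u *m o^T)) P) -> is_pinv (Rm *m (1%:M - u *m o^T)) Z) ->
  Xm *m e0 - Xm *m S *m invmx ((Rm *m S)^T *m (Rm *m S)) *m (Rm *m S)^T *m (Rm *m e0)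
  = Xm *m u - Xm *m (1%:M - u *m o^T) *m Z *m (Rm *m u).
Proof.
move=> hS hT hU hEF hoS hou hoe huo hZ.
have [C eC] : {C | 1%:M - u *m o^T = C} by exists (1%:M - u *m o^T).
have [Dr eDr] : {Dr | Rm *m S = Dr} by exists (Rm *m S).
rewrite eC eDr in hZ hU *.
have [G eG] : {G | invmx (Dr^T *m Dr) = G} by exists (invmx (Dr^T *m Dr)).
rewrite eG.
have hGl : G *m (Dr^T *m Dr) = 1%:M by rewrite -eG; apply: mulVmx.
have hGt : G^T = G by rewrite -eG trmx_inv trmx_mul trmxK.
have hoC : o^T *m C = 0 by rewrite -eC mulmxBr mulmx1 mulmxA hou mul1mx subrr.
have hCt : C^T = C by rewrite -eC linearB /= trmx1 huo.
have hCS : C *m S = S by rewrite -eC mulmxBl mul1mx -mulmxA hoS mulmx0 subr0.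
have hSF : S *m (invmx T *m Ft) = 1%:M - e0 *m o^T.
  by rewrite hS mulmxA -(mulmxA E) mulmxV // mulmx1 hEF.
set K := invmx T *m Ft *m C.
have hSK : S *m K = C.
  by rewrite /K mulmxA hSF mulmxBl mul1mx -mulmxA hoC mulmx0 subr0.
set w := invmx T *m Ft *m (u - e0).
have hSw : S *m w = u - e0.
  by rewrite /w mulmxA hSF mulmxBl mul1mx -mulmxA mulmxBr hou hoe subrr mulmx0 subr0.
have hCC : C *m C = C.
  by rewrite -{1}eC mulmxBl mul1mx -mulmxA hoC mulmx0 subr0.
set Y := S *m G *m Dr^T.
set Psi := Rm *m C in hZ *.
have hPsi : Psi = Dr *m K by rewrite /Psi -eDr -mulmxA hSK.
have hYPsi : Y *m Psi = C.
  by rewrite hPsi /Y -!mulmxA (mulmxA _ Dr) (mulmxA G) hGl mul1mx hSK.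
have hPsiY : Psi *m Y = Dr *m G *m Dr^T.
  by rewrite /Psi /Y !mulmxA -(mulmxA Rm C S) hCS eDr.
have hPYt : (Psi *m Y)^T = Psi *m Y.
  by rewrite hPsiY !trmx_mul trmxK hGt mulmxA.
have hPYP : Psi *m Y *m Psi = Psi.
  by rewrite -mulmxA hYPsi /Psi -mulmxA hCC.
have hpY : is_pinv Psi Y.
  split => //; last by rewrite hYPsi hCt.
  by rewrite hYPsi /Y !mulmxA hCS.
have [h1 h2 h3 h4] := hZ (ex_intro _ Y hpY).
have hPZ : Psi *m Z = Psi *m Y.
  transitivity ((Psi *m Y *m (Psi *m Z))^T).
    by rewrite mulmxA hPYP h3.
  by rewrite trmx_mul h3 hPYt mulmxA h1.
have hXCZ : Xm *m C *m Z = Xm *m S *m G *m Dr^T.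
  transitivity (Xm *m Y *m (Psi *m Z)).
    by rewrite -hYPsi !mulmxA.
  by rewrite hPZ mulmxA -(mulmxA Xm Y Psi) hYPsi /Y !mulmxA -(mulmxA Xm C S) hCS.
rewrite hXCZ.
set A := Xm *m S *m G *m Dr^T.
have hkey : Xm *m (u - e0) = A *m (Rm *m (u - e0)).
  by rewrite -hSw (mulmxA Rm) eDr /A -!mulmxA (mulmxA _ Dr) (mulmxA G) hGl mul1mx.
rewrite -[Xm *m u](subrK (Xm *m e0)) -mulmxBr hkey !mulmxBr.
by rewrite [RHS]addrAC [A *m (Rm *m u) - _ - _]addrAC subrr add0r addrC.
Qed.

Lemma sum_delta (k : nat) (f : 'I_k -> R) (j0 : 'I_k) :
  \sum_j f j * (j == j0)%:R = f j0.
Proof.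
rewrite (bigD1 j0) //= eqxx mulr1 big1 ?addr0 // => j /negbTE ->; by rewrite mulr0.
Qed.

Lemma colsM (n k p : nat) (v : 'I_k -> 'cV[R]_n) (M : 'M[R]_(k, p)) a i :
  (cols_mat v *m M) a i = \sum_j v j a 0 * M j i.
Proof. by rewrite mxE; apply: eq_bigr => j _; rewrite mxE. Qed.

Section Conc.
Variables (n m : nat).
Definition Sm : 'M[R]_(m.+1, m) :=
  \matrix_(j, i) ((j == lift ord0 i)%:R - (j == widen_ord (leqnSn m) i)%:R).
Definition Em : 'M[R]_(m.+1, m) :=
  \matrix_(j, i) ((j == lift ord0 i)%:R - (j == ord0)%:R).
Definition Fm : 'M[R]_(m, m.+1) := \matrix_(i, j) (j == lift ord0 i)%:R.
Definition e0 : 'cV[R]_(m.+1) := \col_j (j == ord0)%:R.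
Definition oc : 'cV[R]_(m.+1) := const_mx 1.
Definition uc : 'cV[R]_(m.+1) := (m.+1%:R)^-1 *: oc.

Lemma c1 (x : 'I_m.+1 -> 'cV[R]_n) : fdiff_mat x = cols_mat x *m Sm.
Proof.
apply/matrixP => a i; rewrite colsM !mxE.
under eq_bigr => j _ do rewrite mxE mulrBr.
by rewrite sumrB !sum_delta.
Qed.

Lemma c2 (x : 'I_m.+1 -> 'cV[R]_n) : x ord0 = cols_mat x *m e0.
Proof.
apply/matrixP => a b; rewrite (ord1 b) colsM.
under eq_bigr => j _ do rewrite mxE.
by rewrite sum_delta.
Qed.

Lemma c3 (x : 'I_m.+1 -> 'cV[R]_n) : mean_col x = cols_mat x *m uc.
Proof.
apply/matrixP => a b; rewrite (ord1 b) colsM !mxE summxE mulrC mulr_suml.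
by apply: eq_bigr => j _; rewrite !mxE mulr1.
Qed.

Lemma c4 (x : 'I_m.+1 -> 'cV[R]_n) :
  centered_mat x = cols_mat x *m (1%:M - uc *m oc^T).
Proof.
rewrite mulmxBr mulmx1 mulmxA -c3; apply/matrixP => a i.
by rewrite !mxE big_ord1 !mxE mulr1.
Qed.

Lemma c5 (r : 'I_m.+1 -> 'cV[R]_n) :
  \matrix_(i < m, a < n) (r (lift ord0 i) - r ord0) a 0 = (cols_mat r *m Em)^T.
Proof.
apply/matrixP => i a; rewrite mxE [RHS]mxE colsM !mxE.
under eq_bigr => j _ do rewrite mxE mulrBr.
by rewrite sumrB !sum_delta.
Qed.

Lemma hEF : Em *m Fm = 1%:M - e0 *m oc^T.
Proof.
apply/matrixP => j k; rewrite !mxE big_ord1 !mxE mulr1.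
case: (unliftP ord0 k) => [k'|] ->.
  under eq_bigr => i _ do rewrite [Fm _ _]mxE (inj_eq lift_inj) eq_sym.
  by rewrite sum_delta mxE.
rewrite big1 ?subrr // => i _; rewrite [Fm _ _]mxE (negbTE (neq_lift _ _)) mulr0 //.
Qed.

Lemma hoS : oc^T *m Sm = 0.
Proof.
apply/matrixP => a i; rewrite (ord1 a) !mxE.
under eq_bigr => j _ do rewrite !mxE mulrBr.
by rewrite sumrB !(sum_delta (fun _ => 1)) subrr.
Qed.

Lemma hou : oc^T *m uc = 1%:M.
Proof.
apply/matrixP => a b; rewrite (ord1 a) (ord1 b) !mxE.
under eq_bigr => j _ do rewrite !mxE mul1r mulr1.
rewrite sumr_const card_ord.
have hm : (m.+1%:R : R) != 0 by rewrite pnatr_eq0.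
by rewrite -[_ *+ m.+1]mulr_natr mulVf.
Qed.

Lemma hoe : oc^T *m e0 = 1%:M.
Proof.
apply/matrixP => a b; rewrite (ord1 a) (ord1 b) !mxE.
under eq_bigr => j _ do rewrite !mxE.
by rewrite (sum_delta (fun _ => 1)).
Qed.

Lemma huo : (uc *m oc^T)^T = uc *m oc^T.
Proof. by apply/matrixP => i j; rewrite !mxE big_ord1 !mxE big_ord1 !mxE. Qed.

Definition Tm := Fm *m Sm.

Lemma hS : Sm = Em *m Tm.
Proof. by rewrite /Tm mulmxA hEF mulmxBl mul1mx -mulmxA hoS mulmx0 subr0. Qed.

Lemma TmE k i : Tm k i = Sm (lift ord0 k) i.
Proof.
rewrite /Tm mxE; under eq_bigr => j _ do rewrite [Fm _ _]mxE mulrC.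
by rewrite sum_delta.
Qed.

Lemma hT : Tm \in unitmx.
Proof.
rewrite unitmxE -det_tr det_trig.
  rewrite big1 ?unitr1 // => i _; rewrite mxE TmE mxE eqxx.
  suff -> : (lift ord0 i == widen_ord (leqnSn m) i) = false by rewrite subr0.
  by apply/negbTE; rewrite -val_eqE /= /bump leq0n add1n neq_ltn ltnSn orbT.
apply/is_trig_mxP => i j hij; rewrite mxE TmE mxE (inj_eq lift_inj).
have -> : (j == i) = false by rewrite -val_eqE /= gtn_eqF.
suff -> : (lift ord0 j == widen_ord (leqnSn m) i) = false by rewrite subrr.
apply/negbTE; rewrite -val_eqE /= /bump leq0n add1n neq_ltn; apply/orP; right.
by apply: (ltn_trans hij).
Qed.
End Conc.

Lemma pinvP (p q : nat) (A : 'M[R]_(p, q)) :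
  (exists P, is_pinv A P) -> is_pinv A (pinv A).
Proof. by move=> h; rewrite /pinv; case: pselect => // h'; exact: (proj2_sig (cid h')). Qed.

End Alg.

Unset Implicit Arguments.
Theorem mainTheorem3 (R : realType) (n m : nat) (x r : 'I_m.+1 -> 'cV[R]_n) :
  affinely_independent r ->
  ((fdiff_mat r)^T *m fdiff_mat r \in unitmx) /\
  x ord0 - fdiff_mat x *m invmx ((fdiff_mat r)^T *m fdiff_mat r) *m (fdiff_mat r)^T *m r ord0
    = mean_col x - centered_mat x *m pinv (centered_mat r) *m mean_col r.
Proof.
rewrite /affinely_independent c5 => hai.
have hU := unit_part (hS _ _) (hT _ _) hai.
rewrite !c1 !c2 !c3 !c4; split => //.
apply: (alg_part _ (hS _ _) (hT _ _) hU (hEF _ _) (hoS _ _) (hou _ _) (hoe _ _) (huo _ _)).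
exact: pinvP.
Qed.
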